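(* Let $\mu$ be a nonempty Young diagram, $p=\mu_1-1$ and $q=\mu'_1-1$. Then $s_{\mu;a}$ depends only on the $p+q$ parameters $a_1,\dots,a_p$ and $\widehat a_1,\dots,\widehat a_q$, i.e. on $a_i$ for $1-q\le i\le p$: if two sequences $a,b$ satisfy $a_i=b_i$ for all $1-q\le i\le p$, then $s_{\mu;a}=s_{\mu;b}$.
   Context: $\Lambda$ is the algebra of symmetric functions over $\mathbb C$ with complete homogeneous $h_k$ and elementary $e_k$. For a sequence $a=(a_i)_{i\in\mathbb Z}$ of complex numbers define $h_{k;a}=\sum_{i=1}^k(-1)^{k-i}e_{k-i}(a_1,\dots,a_{k-1})h_i$ for $k\ge1$, $h_{0;a}=1$, $h_{k;a}=0$ for $k<0$; let $(\tau^ra)_i=a_{i+r}$; and set $s_{\mu;a}=\det[h_{\mu_i-i+j;\,\tau^{1-j}a}]_{i,j=1}^N$ for any $N\ge\ell(\mu)$. The dual sequence is $\widehat a_i=-a_{1-i}$, so $(\widehat a_1,\dots,\widehat a_q)=(-a_0,-a_{-1},\dots,-a_{1-q})$. $\mu'$ is the transposed diagram. *)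

(* Defs.v *)
From mathcomp Require Import all_boot all_algebra.
From mathcomp Require Import Rstruct complex.
Set Implicit Arguments. Unset Strict Implicit. Unset Printing Implicit Defensive.
Import GRing.Theory.
Local Open Scope ring_scope.

Notation CC := (Rdefinitions.R[i]).

Definition esym_eval (m j : nat) (x : 'I_m -> CC) : CC :=
  \sum_(S : {set 'I_m} | #|S| == j) \prod_(i in S) x i.

Definition tau (r : int) (a : int -> CC) : int -> CC := fun i => a (i + r).

Definition hfac (A : comAlgType CC) (h : nat -> A) (a : int -> CC) (k : int) : A :=
  match k with
  | Posz 0 => 1
  | Posz k' =>
      \sum_(1 <= i < k'.+1)
        (((-1) ^+ (k' - i)%N * esym_eval (k' - i)%N
             (fun m : 'I_(k'.-1) => a (Posz m.+1))) *: h i)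
  | Negz _ => 0
  end.

(* mu_i (1-based), as an int *)
Definition part (mu : seq nat) (i : nat) : int := Posz (nth 0%N mu i.-1).

Definition fschur (A : comAlgType CC) (h : nat -> A) (mu : seq nat)
    (a : int -> CC) (N : nat) : A :=
  \det (\matrix_(i < N, j < N)
          hfac h (tau (1 - Posz j.+1) a)
               (part mu i.+1 - Posz i.+1 + Posz j.+1)).

Definition is_partition (mu : seq nat) : bool :=
  sorted geq mu && all (fun x => 0 < x)%N mu.

(* mu'_1 = number of boxes in the first column *)
Definition conj1 (mu : seq nat) : nat := count (fun x => 0 < x)%N mu.

(* Main.v *)
Require Import Defs.
From mathcomp Require Import all_boot all_algebra.
From mathcomp Require Import Rstruct complex.
From mathcomp Require Import zify.
Import GRing.Theory.
Local Open Scope ring_scope.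

Lemma esym_ext m j (x y : 'I_m -> CC) :
  (forall i, x i = y i) -> @esym_eval m j x = @esym_eval m j y.
Proof.
move=> H; rewrite /esym_eval; apply: eq_bigr => S _; apply: eq_bigr => i _.
exact: H.
Qed.

Lemma hfac_ext (A : comAlgType CC) (h : nat -> A) (c c' : int -> CC) (k : int) :
  (forall m : nat, (Posz m.+2 <= k)%R -> c (Posz m.+1) = c' (Posz m.+1)) ->
  hfac h c k = hfac h c' k.
Proof.
case: k => [[|k']|n] //= H.
apply: eq_bigr => i _; congr (_ * _ *: _); apply: esym_ext => m.
apply: H; rewrite lez_nat; have := ltn_ord m; lia.
Qed.

Lemma hfac_neg (A : comAlgType CC) (h : nat -> A) (c : int -> CC) (k : int) :
  (k < 0)%R -> hfac h c k = 0.
Proof. by case: k => [[|k']|n]. Qed.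

Lemma fschur_S (A : comAlgType CC) (h : nat -> A) (mu : seq nat)
    (a : int -> CC) N :
  (size mu <= N)%N -> fschur h mu a N.+1 = fschur h mu a N.
Proof.
move=> HN; rewrite /fschur (expand_det_row _ ord_max) big_ord_recr /=.
have Hp : part mu N.+1 = 0 by rewrite /part /= nth_default.
rewrite big1 ?add0r; last first.
  move=> j _; rewrite !mxE Hp hfac_neg ?mul0r //.
  have := ltn_ord j; rewrite /=; lia.
rewrite !mxE Hp /cofactor /= addnn -signr_odd odd_double expr0 !mul1r.
have -> : (0 - Posz N.+1 + Posz N.+1 = 0)%R by rewrite addrNK.
rewrite /hfac mul1r; congr (\det _); apply/matrixP => i j; rewrite !mxE.
by rewrite !lift_max.
Qed.

Lemma fschur_ge (A : comAlgType CC) (h : nat -> A) (mu : seq nat)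
    (a : int -> CC) N :
  (size mu <= N)%N -> fschur h mu a N = fschur h mu a (size mu).
Proof.
elim: N => [|N IH] HN.
  by move: HN; rewrite leqn0 => /eqP ->.
move: HN; rewrite leq_eqVlt => /orP[/eqP -> //| HN].
by rewrite fschur_S // IH.
Qed.

Theorem corollary8 (A : comAlgType CC) (h : nat -> A) (mu : seq nat)
    (a b : int -> CC) :
  is_partition mu -> mu != [::] ->
  let p := ((head 0%N mu).-1) in
  let q := ((conj1 mu).-1) in
  (forall i : int, 1 - Posz q <= i <= Posz p -> a i = b i) ->
  forall N : nat, (size mu <= N)%N -> fschur h mu a N = fschur h mu b N.
Proof.
move=> /andP[Hs Hpos] Hne p q Hab N HN.
rewrite (@fschur_ge A h mu a N HN) (@fschur_ge A h mu b N HN).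
have Hq : conj1 mu = size mu by apply/eqP; rewrite -all_count.
rewrite /fschur; congr (\det _); apply/matrixP => i j; rewrite !mxE.
apply: hfac_ext => m Hm.
rewrite /tau; apply: Hab.
have Hhd : (nth 0 mu i <= head 0 mu)%N.
  rewrite -nth0; apply: (sorted_leq_nth (leT:=geq) (fun x y z h1 h2 => leq_trans h2 h1) leqnn 0 Hs);
    by rewrite ?inE ?lt0n ?size_eq0.
have Hi0 : (0 < nth 0 mu i)%N by apply: (allP Hpos); apply: mem_nth.
have := ltn_ord i; have := ltn_ord j.
move: Hm; rewrite /p /q /part /= Hq.
lia.
Qed.
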